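(* Let $\phi:\mathbb{R}\to\mathbb{R}$ be differentiable and let $f(z)=A\phi(Bz)$ with $A\in\mathbb{R}^{k_0\times k}$, $B\in\mathbb{R}^{k\times k_0}$, $z\in\mathbb{R}^{k_0}$. Let $x\in\mathbb{R}^{k_0}$ and run gradient descent with learning rate $\gamma>0$ on $\mathcal{L}(x,f)=\frac12\|x-f(x)\|_2^2$, i.e. $A^{(t+1)}=A^{(t)}+\gamma(x-A^{(t)}\phi(B^{(t)}x))\phi(B^{(t)}x)^T$, $B^{(t+1)}=B^{(t)}+\gamma\,\mathrm{diag}(\phi'(B^{(t)}x)){A^{(t)}}^T(x-A^{(t)}\phi(B^{(t)}x))x^T$. If $A^{(0)}=x{a^{(0)}}^T$ and $B^{(0)}=b^{(0)}x^T$ for some $a^{(0)},b^{(0)}\in\mathbb{R}^k$, then for all time steps $t$ there exist $a^{(t)},b^{(t)}\in\mathbb{R}^k$ with $A^{(t)}=x{a^{(t)}}^T$ and $B^{(t)}=b^{(t)}x^T$.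
   Context: $\phi$ and $\phi'$ are applied coordinatewise; $\mathrm{diag}(w)$ is the diagonal matrix with diagonal $w$. *)

(* Defs.v *)
From mathcomp Require Import all_boot all_order all_algebra.
From mathcomp Require Import all_classical all_reals all_analysis.
Set Implicit Arguments. Unset Strict Implicit. Unset Printing Implicit Defensive.
Import Order.TTheory GRing.Theory Num.Theory.
Local Open Scope ring_scope.

Definition cw (R : realType) (phi : R -> R) (n : nat) (v : 'cV[R]_n) : 'cV[R]_n :=
  map_mx phi v.

Definition gd_A (R : realType) (phi : R -> R) (k0 k : nat) (gamma : R)
  (x : 'cV[R]_k0) (A : 'M[R]_(k0, k)) (B : 'M[R]_(k, k0)) : 'M[R]_(k0, k) :=
  A + gamma *: ((x - A *m cw phi (B *m x)) *m (cw phi (B *m x))^T).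

Definition gd_B (R : realType) (phi : R -> R) (k0 k : nat) (gamma : R)
  (x : 'cV[R]_k0) (A : 'M[R]_(k0, k)) (B : 'M[R]_(k, k0)) : 'M[R]_(k, k0) :=
  B + gamma *: (diag_mx (cw (derive1 phi) (B *m x))^T *m A^T
                 *m (x - A *m cw phi (B *m x)) *m x^T).

(* Main.v *)
Require Import Defs.
From mathcomp Require Import all_boot all_order all_algebra.
From mathcomp Require Import all_classical all_reals all_analysis.
Import Order.TTheory GRing.Theory Num.Theory.
Local Open Scope ring_scope.

Theorem mainTheorem5 (R : realType) (phi : R -> R) (k0 k : nat) (gamma : R)
  (x : 'cV[R]_k0) (A : nat -> 'M[R]_(k0, k)) (B : nat -> 'M[R]_(k, k0))
  (a0 b0 : 'cV[R]_k) :
  (forall r : R, derivable phi r 1) ->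
  0 < gamma ->
  (forall t, A t.+1 = gd_A phi gamma x (A t) (B t)) ->
  (forall t, B t.+1 = gd_B phi gamma x (A t) (B t)) ->
  A 0%N = x *m a0^T -> B 0%N = b0 *m x^T ->
  forall t : nat, exists a b : 'cV[R]_k, A t = x *m a^T /\ B t = b *m x^T.
Proof.
move=> _ _ HA HB HA0 HB0; elim=> [|t [a [b [Ha Hb]]]].
  by exists a0, b0.
set u := cw phi (B t *m x).
set D := diag_mx (cw (derive1 phi) (B t *m x))^T.
have Hr : x - A t *m u = x *m (1%:M - a^T *m u).
  by rewrite Ha mulmxBr mulmx1 mulmxA.
exists (a^T + gamma *: ((1%:M - a^T *m u) *m u^T))^T.
exists (b + gamma *: (D *m (A t)^T *m x *m (1%:M - a^T *m u))).
split.
  by rewrite HA /gd_A -/u Hr trmxK Ha [RHS]mulmxDr -scalemxAr !mulmxA.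
rewrite HB /gd_B -/u -/D Hr Hb [RHS]mulmxDl -scalemxAl. congr (_ + _ *: _). by rewrite !mulmxA.
Qed.
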